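(* Let $A$ be a general metric space, $M$ a left module on $A$ and $\mathcal F$ a filter on $A$. Then $\sup_{x\in A}[M^-(\mathcal F)(x),M(x)]\ \le\ \lim^+_{\mathcal F}M$, with equality if $\mathcal F$ is weakly flat. In particular, for weakly flat filters $\mathcal F_1,\mathcal F_2$, $$\sup_{x\in A}[M^-(\mathcal F_1)(x),M^-(\mathcal F_2)(x)]=\lim^+_{x\in\mathcal F_1}\lim^-_{y\in\mathcal F_2}A(x,y).$$
   Context: $[0,\infty]$ with $+$ ($x+\infty=\infty$), $[x,y]=\max(y-x,0)$ for finite $x,y$, $[x,\infty]=\infty$ for $x<\infty$, $[\infty,y]=0$; $\inf\emptyset=\infty$, $\sup\emptyset=0$. A general metric space $A$ is a set with $A(-,-):A\times A\to[0,\infty]$, $A(x,x)=0$, $A(x,z)\le A(x,y)+A(y,z)$. A left module is $M:A\to[0,\infty]$ with $M(x)\le M(y)+A(x,y)$. A filter on $A$ is a nonempty set of nonempty subsets closed under finite intersections and supersets; $\lim^+_{\mathcal F}t=\inf_{f\in\mathcal F}\sup_{x\in f}t(x)$, $\lim^-_{\mathcal F}t=\sup_{f\in\mathcal F}\inf_{x\in f}t(x)$; $M^-(\mathcal F)(x)=\lim^-_{y\in\mathcal F}A(x,y)$; $\mathcal F$ is weakly flat iff $\lim^+_{\mathcal F}M^-(\mathcal F)=0$. *)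

(* Defs.v *)
From HB Require Import structures.
From mathcomp Require Import all_boot all_order all_algebra.
From mathcomp Require Import all_classical all_reals ereal.
Set Implicit Arguments. Unset Strict Implicit. Unset Printing Implicit Defensive.
Import Order.TTheory GRing.Theory Num.Theory.
Local Open Scope classical_set_scope.
Local Open Scope ereal_scope.

(* Values live in [0, +oo] embedded in \bar R (all relevant quantities are
   nonnegative). *)

(* supremum with the convention sup(empty) = 0 *)
Definition esup0 {R : realType} (S : set (\bar R)) : \bar R :=
  ereal_sup (S `|` [set 0]).

(* infimum with inf(empty) = +oo (ereal_inf already satisfies this) *)
Definition einf {R : realType} (S : set (\bar R)) : \bar R := ereal_inf S.

(* truncated difference [x, y] on [0, +oo] *)
Definition tsub {R : realType} (x y : \bar R) : \bar R :=
  if x == +oo then 0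
  else if y == +oo then +oo
  else maxe (y - x) 0.

Definition is_gen_metric {R : realType} {T : Type} (d : T -> T -> \bar R) :=
  (forall x y, 0 <= d x y) /\ (forall x, d x x = 0) /\
  (forall x y z, d x z <= d x y + d y z).

Definition is_left_module {R : realType} {T : Type}
    (d : T -> T -> \bar R) (M : T -> \bar R) :=
  (forall x, 0 <= M x) /\ (forall x y, M x <= M y + d x y).

Definition is_filter {T : Type} (F : set (set T)) :=
  (exists f, F f) /\ (forall f, F f -> f !=set0) /\
  (forall f g, F f -> F g -> F (f `&` g)) /\
  (forall f g, F f -> f `<=` g -> F g).

Definition limsupF {R : realType} {T : Type} (F : set (set T)) (t : T -> \bar R)
  : \bar R := einf [set esup0 (t @` f) | f in F].

Definition liminfF {R : realType} {T : Type} (F : set (set T)) (t : T -> \bar R)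
  : \bar R := esup0 [set einf (t @` f) | f in F].

Definition Mminus {R : realType} {T : Type} (d : T -> T -> \bar R)
  (F : set (set T)) (x : T) : \bar R := liminfF F (fun y => d x y).

Definition weakly_flat {R : realType} {T : Type} (d : T -> T -> \bar R)
  (F : set (set T)) := limsupF F (Mminus d F) = 0.

(* Main.v *)
Require Import Defs.
From mathcomp Require Import all_boot all_order all_algebra.
From mathcomp Require Import all_classical all_reals ereal.
Import Order.TTheory GRing.Theory Num.Theory.
Local Open Scope classical_set_scope.
Local Open Scope ereal_scope.

Section H.
Variable R : realType.

Lemma esup0_ub (S : set (\bar R)) x : S x -> x <= esup0 S.
Proof. by move=> Sx; apply: ereal_sup_ubound; left. Qed.

Lemma esup0_ge0 (S : set (\bar R)) : 0 <= esup0 S.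
Proof. by apply: ereal_sup_ubound; right. Qed.

Lemma esup0_le (S : set (\bar R)) m :
  (forall x, S x -> x <= m) -> 0 <= m -> esup0 S <= m.
Proof. by move=> H m0; apply: ge_ereal_sup => x [/H|->]. Qed.

Lemma einf_lb (S : set (\bar R)) x : S x -> einf S <= x.
Proof. by move=> Sx; apply: ereal_inf_lbound. Qed.

Lemma einf_glb (S : set (\bar R)) m :
  (forall x, S x -> m <= x) -> m <= einf S.
Proof. by move=> H; apply: le_ereal_inf_tmp => x /H. Qed.

Lemma ge0_cases (x : \bar R) : 0 <= x -> x = +oo \/ x \is a fin_num.
Proof. by case: x => [r| |] //= _; [right|left]. Qed.
Arguments ge0_cases {x}.

Lemma ge0_ny (x : \bar R) : 0 <= x -> x != -oo.
Proof. by case: x. Qed.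

Lemma tsub_le (a b c : \bar R) : 0 <= b -> 0 <= c -> a <= b + c -> tsub c a <= b.
Proof.
move=> b0 c0 H; rewrite /tsub.
case: (ge0_cases c0) => [->|cf]; first by rewrite eqxx.
have -> : (c == +oo) = false by move: cf; case: c {c0 H} => //.
case: eqP => [ao|_].
  move: H; rewrite ao; case: (ge0_cases b0) => [->//|bf].
  by move: bf cf; case: b {b0}; case: c {c0} => //.
rewrite ge_max b0 andbT leeBlDr //.
Qed.

Lemma tsub_ge (a b c : \bar R) : 0 <= b -> 0 <= c -> tsub c a <= b -> a <= b + c.
Proof.
move=> b0 c0; rewrite /tsub.
case: (ge0_cases c0) => [->|cf].
  by rewrite eqxx => _; case: b b0 => [r| |] //= _; rewrite ?leey.
have -> : (c == +oo) = false by move: cf; case: c {c0} => //.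
case: eqP => [->|_].
  by rewrite leye_eq => /eqP ->; move: cf; case: c {c0}.
by rewrite ge_max => /andP [H _]; rewrite -leeBlDr.
Qed.

Variable T : Type.

Lemma part1 (d : T -> T -> \bar R) (M : T -> \bar R) (F : set (set T)) :
  (forall x y, 0 <= d x y) -> is_left_module d M ->
  esup0 [set tsub (Mminus d F x) (M x) | x in setT] <= limsupF F M.
Proof.
move=> d0 [M0 HM].
have L0 : 0 <= limsupF F M.
  by apply: einf_glb => _ [f _ <-]; apply: esup0_ge0.
apply: esup0_le => // _ [x _ <-].
apply: einf_glb => _ [f Ff <-].
set S := esup0 _.
set I := einf [set d x y | y in f].
have I0 : 0 <= I by apply: einf_glb => _ [y _ <-].
have Mm0 : 0 <= Mminus d F x by apply: esup0_ge0.
apply: tsub_le => //; first exact: esup0_ge0.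
have IM : I <= Mminus d F x by apply: esup0_ub; exists f.
apply: (le_trans _ (leeD (lexx S) IM)).
case: (ge0_cases (esup0_ge0 (M @` f))) => [Sinf|Sf].
  by rewrite /S Sinf addye ?leey // ge0_ny.
rewrite -leeBlDl //; apply: einf_glb => _ [y fy <-].
rewrite leeBlDl //; apply: (le_trans (HM x y)); apply: leeD => //.
by apply: esup0_ub; exists y.
Qed.

Lemma part2 (d : T -> T -> \bar R) (M : T -> \bar R) (F : set (set T)) :
  (forall x y, 0 <= d x y) -> is_left_module d M -> weakly_flat d F ->
  limsupF F M <= esup0 [set tsub (Mminus d F x) (M x) | x in setT].
Proof.
move=> d0 [M0 HM] wf.
set L := esup0 _.
have L0 : 0 <= L by apply: esup0_ge0.
have Hx : forall x, M x <= L + Mminus d F x.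
  move=> x; apply: tsub_ge => //; first exact: esup0_ge0.
  by apply: esup0_ub; exists x.
apply/lee_addgt0Pr => e e0.
have : einf [set esup0 (Mminus d F @` f) | f in F] < e%:E.
  by move: wf; rewrite /weakly_flat /limsupF => ->; rewrite lte_fin.
case/ereal_inf_lt => _ [f Ff <-] lt.
apply: (@le_trans _ _ (esup0 (M @` f))); first by apply: einf_lb; exists f.
apply: (le_trans _ (leeD (lexx L) (ltW lt))).
apply: esup0_le; last by apply: adde_ge0 => //; apply: esup0_ge0.
move=> _ [y fy <-]; apply: (le_trans (Hx y)); apply: leeD => //.
by apply: esup0_ub; exists y.
Qed.

Lemma Mminus_module (d : T -> T -> \bar R) (F : set (set T)) :
  is_gen_metric d -> is_left_module d (Mminus d F).
Proof.
move=> [d0 [dxx tri]]; split => [x|x y]; first exact: esup0_ge0.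
apply: esup0_le; last by apply: adde_ge0 => //; apply: esup0_ge0.
move=> _ [g Fg <-].
set J := einf [set d y z | z in g].
have J0 : 0 <= J by apply: einf_glb => _ [z _ <-].
have JM : J <= Mminus d F y by apply: esup0_ub; exists g.
apply: (le_trans _ (leeD JM (lexx (d x y)))); rewrite addeC.
case: (ge0_cases (d0 x y)) => [->|df].
  by rewrite addye ?leey // ge0_ny.
rewrite -leeBlDl //; apply: einf_glb => _ [z gz <-].
rewrite leeBlDl //; apply: (le_trans _ (tri x y z)).
by apply: einf_lb; exists z.
Qed.

End H.

Theorem mainTheorem15 (R : realType) (T : Type) (d : T -> T -> \bar R)
  (M : T -> \bar R) (F : set (set T)) :
  is_gen_metric d -> is_left_module d M -> is_filter F ->
  (esup0 [set tsub (Mminus d F x) (M x) | x in setT] <= limsupF F M)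
  /\ (weakly_flat d F ->
      esup0 [set tsub (Mminus d F x) (M x) | x in setT] = limsupF F M)
  /\ (forall F1 F2 : set (set T), is_filter F1 -> is_filter F2 ->
      weakly_flat d F1 -> weakly_flat d F2 ->
      esup0 [set tsub (Mminus d F1 x) (Mminus d F2 x) | x in setT]
      = limsupF F1 (fun x => liminfF F2 (fun y => d x y))).
Proof.
move=> dm HM _; have d0 := dm.1.
split; first exact: part1.
split.
  by move=> wf; apply/eqP; rewrite eq_le part1 // part2.
move=> F1 F2 _ _ wf1 _.
have HM2 := @Mminus_module R T d F2 dm.
apply/eqP; rewrite eq_le.
by rewrite (@part1 R T d _ F1 d0 HM2) (@part2 R T d _ F1 d0 HM2 wf1).
Qed.
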